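(* Let $\Sigma$ be a topological Markov chain with shift $\sigma$ and $\mu$ a Gibbs measure on $\Sigma$ for a H\''older continuous potential (as in the context), and let $\varepsilon>0$. Then there exists a sequence of cylinders $\{C_n\}$, $C_n$ defined on an interval $\Lambda_n\subset\mathbb Z$, with $\sum_n\mu(C_n)=\infty$, such that the center of each $\Lambda_n$ lies in $[-\varepsilon|\Lambda_n|/2,\varepsilon|\Lambda_n|/2]$, and such that for $\mu$-a.e. $\underline\omega\in\Sigma$ there are only finitely many $n$ with $\sigma^n\underline\omega\in C_n$ (in particular $\{C_n\}$ is not a Borel-Cantelli sequence). The same holds with the centering condition replaced by: the left endpoint of each $\Lambda_n$ lies in $[0,\varepsilon|\Lambda_n|]$.
   Context: Let $M\ge2$ and $\mathbf A$ an $M\times M$ zero-one matrix with $\mathbf A^K$ entrywise positive for some $K\ge1$; $\Sigma=\{\underline\omega\in\{1,\dots,M\}^{\mathbb Z}:\mathbf A_{\omega_i\omega_{i+1}}=1\ \forall i\}$ with product topology and left shift $(\sigma\underline\omega)_i=\omega_{i+1}$; $\mu$ is the unique $\sigma$-invariant Gibbs measure of a H\''older continuous function on $\Sigma$. A cylinder defined on $\Lambda=[n^-,n^+]\subset\mathbb Z$ is $\{\underline\omega'\in\Sigma:\omega_i'=\omega_i,\ n^-\le i\le n^+\}$ for fixed symbols $\omega_i$; $|\Lambda|=n^+-n^-+1$, and the center of $\Lambda$ is $(n^-+n^+)/2$. A sequence of sets $\{A_n\}$ with $\sum\mu(A_n)=\infty$ is a Borel-Cantelli sequence if for $\mu$-a.e.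 $\underline\omega$ there are infinitely many $n$ with $\sigma^n\underline\omega\in A_n$. *)

(* Defs.v *)
From HB Require Import structures.
From mathcomp Require Import all_boot all_order all_algebra.
From mathcomp Require Import all_classical all_reals all_analysis.
Import Order.TTheory GRing.Theory Num.Theory.
Set Implicit Arguments. Unset Strict Implicit. Unset Printing Implicit Defensive.
Local Open Scope classical_set_scope.
Local Open Scope ring_scope.

(* Symbols: 'I_(m.+2), i.e. M = m+2 >= 2 symbols labelled 0..M-1.
   Two-sided sequences: int -> 'I_(m.+2). *)
Definition seqs (m : nat) := int -> 'I_(m.+2).
HB.instance Definition _ m := Choice.on (seqs m).
HB.instance Definition _ m := isPointed.Build (seqs m) (fun _ => ord0).

Definition coord_sets (m : nat) : set (set (seqs m)) :=
  [set B | exists (i : int) (k : 'I_(m.+2)), B = [set w | w i = k]].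

Definition Seqs (m : nat) := g_sigma_algebraType (@coord_sets m).

Definition sshift (m : nat) (w : Seqs m) : Seqs m := fun i => w (i + 1).

Definition zero_one (m : nat) (A : 'M[int]_(m.+2)) :=
  forall i j, A i j = 0 \/ A i j = 1.

Definition primitive_mx (m : nat) (A : 'M[int]_(m.+2)) :=
  exists K : nat, (0 < K)%N /\ forall i j, 0 < (A ^+ K) i j.

Definition TMC (m : nat) (A : 'M[int]_(m.+2)) : set (Seqs m) :=
  [set w | forall i : int, A (w i) (w (i + 1)) = 1].

Definition cylinder (m : nat) (A : 'M[int]_(m.+2)) (a b : int) (w : Seqs m)
  : set (Seqs m) :=
  [set w' | TMC A w' /\ forall i : int, a <= i <= b -> w' i = w i].

(* Hoelder continuity on Sigma_A (w.r.t. the standard metrics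
   d_theta(w,w') = theta^{min{|i| : w_i <> w'_i}}) *)
Definition holder (R : realType) (m : nat) (A : 'M[int]_(m.+2))
  (phi : Seqs m -> R) :=
  exists (C theta : R), 0 < C /\ 0 < theta < 1 /\
    forall (w w' : Seqs m) (k : nat), TMC A w -> TMC A w' ->
      (forall i : int, `|i| < k%:Z -> w i = w' i) ->
      `|phi w - phi w'| <= C * theta ^+ k.

Definition birkhoff (R : realType) (m : nat) (phi : Seqs m -> R) (n : nat)
  (w : Seqs m) : R :=
  \sum_(k < n) phi (iter k (@sshift m) w).

Definition gibbs_measure (R : realType) (m : nat) (A : 'M[int]_(m.+2))
  (phi : Seqs m -> R) (mu : probability (Seqs m) R) :=
  [/\ mu (TMC A) = 1%E,
      (forall B : set (Seqs m), measurable B ->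
         mu (@sshift m @^-1` B) = mu B) &
      exists (c1 c2 P : R), 0 < c1 /\ 0 < c2 /\
        forall (w : Seqs m) (n : nat), TMC A w -> (0 < n)%N ->
          let g := expR (- P * n%:R + birkhoff phi n w) in
          ((c1 * g)%:E <= mu (cylinder A 0 (n%:Z - 1) w) <= (c2 * g)%:E)%E].

(* Main.v *)
Require Import Defs.
From HB Require Import structures.
From mathcomp Require Import all_boot all_order all_algebra.
From mathcomp Require Import all_classical all_reals all_analysis.
From mathcomp Require Import zify ring lra.
Import Order.TTheory GRing.Theory Num.Theory.
Local Open Scope classical_set_scope.
Local Open Scope ring_scope.
Set Implicit Arguments. Unset Strict Implicit. Unset Printing Implicit Defensive.

Section meas.
Variable (m : nat) (A : 'M[int]_(m.+2)).

Lemma coord_meas (i : int) (k : 'I_(m.+2)) :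
  measurable [set w : Seqs m | w i = k].
Proof. by apply: sub_gen_smallest; exists i, k. Qed.

Lemma bigcapZ_meas (F : int -> set (Seqs m)) :
  (forall i, measurable (F i)) -> measurable (\bigcap_i F i).
Proof.
move=> mF; rewrite -[X in measurable X]setCK setC_bigcap; apply: measurableC.
apply: countable_bigcupT_measurable; first exact: countableP.
by move=> i; apply: measurableC; exact: mF.
Qed.

Lemma TMC_meas : measurable (TMC A).
Proof.
have -> : TMC A = \bigcap_i \bigcup_(k in [set: 'I_(m.+2)])
   \bigcup_(l in [set l | A k l = 1]) ([set w : Seqs m | w i = k] `&` [set w | w (i+1) = l]).
  apply/seteqP; split => x /=.
    move=> Hx i _; exists (x i) => //; exists (x (i+1)) => //; exact: Hx.
  move=> Hx i; have [k _ [l /= Hkl [-> ->]]] := Hx i I; exact: Hkl.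
apply: bigcapZ_meas => i; apply: fin_bigcup_measurable; first exact: finite_finset.
move=> k _; apply: fin_bigcup_measurable; first exact: finite_finset.
by move=> l _; apply: measurableI; apply: coord_meas.
Qed.

Lemma cyl_meas a b w : measurable (cylinder A a b w).
Proof.
have -> : cylinder A a b w = TMC A `&`
   \bigcap_i (if (a <= i <= b) then [set x : Seqs m | x i = w i] else setT).
  apply/seteqP; split => x /=.
    by move=> [H1 H2]; split => // i _; case: ifP => // /H2.
  move=> [H1 H2]; split => // i Hi; by have := H2 i I; rewrite Hi.
apply: measurableI; first exact: TMC_meas.
by apply: bigcapZ_meas => i; case: ifP => _; [exact: coord_meas|exact: measurableT].
Qed.

End meas.


Section shift.
Variable (m : nat) (A : 'M[int]_(m.+2)).

Lemma iter_sshift n (x : Seqs m) : iter n (@sshift m) x = (fun i => x (i + n%:Z)).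
Proof.
elim: n => [|n IH] /=; first by apply/funext => i; rewrite addr0.
rewrite IH; apply/funext => i; rewrite /sshift -addrA; congr (x (i + _)).
Qed.

Lemma TMC_shiftZ (x : Seqs m) (c : int) :
  TMC A ((fun i => x (i + c)) : Seqs m) <-> TMC A x.
Proof.
split => H i /=.
  by have := H (i - c); rewrite subrK addrAC subrK.
by rewrite addrAC; apply: H.
Qed.

Lemma cyl_shiftZ a b w (x : Seqs m) (c : int) :
  cylinder A a b w ((fun i => x (i + c)) : Seqs m) <->
  cylinder A (a + c) (b + c) (fun j => w (j - c)) x.
Proof.
rewrite /cylinder /=; split => -[H1 H2]; split.
- by move/TMC_shiftZ: H1.
- by move=> i Hi; rewrite -(H2 (i - c)) ?subrK // lerBrDr lerBlDr.
- exact: (proj2 (TMC_shiftZ x c) H1).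
- by move=> i Hi; rewrite H2 ?addrK // !lerD2r.
Qed.

Lemma cyl_iter n a b w (x : Seqs m) :
  cylinder A a b w (iter n (@sshift m) x) <->
  cylinder A (a + n%:Z) (b + n%:Z) (fun j => w (j - n%:Z)) x.
Proof. by rewrite iter_sshift; exact: cyl_shiftZ. Qed.

Lemma cyl_ext a b w w' : w = w' -> cylinder A a b w = cylinder A a b w'.
Proof. by move=> ->. Qed.

End shift.


Section inv.
Variable (R : realType) (m : nat) (A : 'M[int]_(m.+2)) (mu : probability (Seqs m) R).
Hypothesis cylm : forall a b w, measurable (cylinder A a b w).
Hypothesis inv : forall B : set (Seqs m), measurable B -> mu (@sshift m @^-1` B) = mu B.

Lemma cyl_mu_shift1 a b w :
  mu (cylinder A (a + 1) (b + 1) (fun j => w (j - 1))) = mu (cylinder A a b w).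
Proof.
rewrite -(inv (cylm a b w)); congr (mu _); apply/seteqP; split => x /=.
  by move=> H; apply: (proj2 (cyl_shiftZ A a b w x 1)).
by move=> H; apply: (proj1 (cyl_shiftZ A a b w x 1)).
Qed.

Lemma cyl_mu_shiftn (n : nat) a b w :
  mu (cylinder A (a + n%:Z) (b + n%:Z) (fun j => w (j - n%:Z))) = mu (cylinder A a b w).
Proof.
elim: n => [|n IH].
  rewrite !addr0; congr (mu (cylinder _ _ _ _)).
  exact: (@funext int _ _ _ (fun j => congr1 w (subr0 j))).
rewrite -IH -(cyl_mu_shift1 (a + n%:Z) (b + n%:Z)).
congr (mu (cylinder _ _ _ _)).
- by rewrite -addrA -[_.+1]addn1 PoszD.
- by rewrite -addrA -[_.+1]addn1 PoszD.
- apply: funext => j /=; congr (w _).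
  by rewrite -[_.+1]addn1 PoszD opprD addrAC addrA.
Qed.

Lemma cyl_mu0 a b w :
  mu (cylinder A a b w) = mu (cylinder A 0 (b - a) (fun j => w (j + a))).
Proof.
case: a => n.
  rewrite -[RHS](cyl_mu_shiftn n); congr (mu (cylinder _ _ _ _)).
  - by rewrite subrK.
  - by apply: funext => j /=; rewrite subrK.
rewrite -[LHS](cyl_mu_shiftn n.+1) NegzE; congr (mu (cylinder _ _ _ _)).
- by rewrite addNr.
Qed.

End inv.


Section comb.
Variable (m : nat) (A : 'M[int]_(m.+2)).
Hypothesis zo : zero_one A.

Lemma path_exists (k : nat) (i j : 'I_(m.+2)) : 0 < (A ^+ k) i j ->
  exists p : nat -> 'I_(m.+2), [/\ p 0%N = i, p k = j &
     forall t, (t < k)%N -> A (p t) (p t.+1) = 1].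
Proof.
elim: k i => [|k IH] i.
  rewrite expr0 mxE; case: eqP => [->|]; last by rewrite ltxx.
  by move=> _; exists (fun=> j); split.
rewrite exprS mxE => Hs.
have [l Hl] : exists l, 0 < A i l * (A ^+ k) l j.
  apply/not_existsP => H; move: Hs; apply/negP; rewrite -leNgt.
  by apply: sumr_le0 => l _; rewrite leNgt; apply/negP => /(H l).
have Ail : A i l = 1.
  by case: (zo i l) => // H0; move: Hl; rewrite H0 mul0r ltxx.
move: Hl; rewrite Ail mul1r => /IH [q [q0 qk qt]].
exists (fun t => if t is t'.+1 then q t' else i); split => //.
by case=> [|t] /= Ht; [rewrite q0 | apply: qt].
Qed.


Hypothesis prim : primitive_mx A.

Lemma succ_exists (i : 'I_(m.+2)) : exists l, A i l = 1.
Proof.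
have [K [K0 HK]] := prim.
have [p [p0 _ pt]] := path_exists (HK i i).
by exists (p 1%N); rewrite -p0; apply: pt.
Qed.

Definition succ (i : 'I_(m.+2)) := projT1 (cid (succ_exists i)).
Lemma succP i : A i (succ i) = 1.
Proof. exact: (projT2 (cid (succ_exists i))). Qed.

Definition glue (w : Seqs m) (N : int) (v : nat -> 'I_(m.+2)) : Seqs m :=
  fun i => if i < N then w i else v `|i - N|%N.

Lemma glue_TMC w N v : TMC A w -> v 0%N = w N ->
  (forall t, A (v t) (v t.+1) = 1) -> TMC A (glue w N v).
Proof.
move=> Hw v0 Hv i; rewrite /glue.
have [iN|Ni] := ltP i N.
  have [i1N|] := ltP (i + 1) N; first exact: Hw.
  move=> Ni1; have e : i + 1 = N.
    by lia.
  by rewrite -e subrr /= v0 -e; exact: Hw.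
have Ni1 : ~~ (i + 1 < N).
  by rewrite -leNgt (le_trans Ni) // lerDl.
rewrite (negbTE Ni1).
have -> : `|(i + 1 - N)%R|%N = (`|(i - N)%R|%N).+1 by lia.
exact: Hv.
Qed.


Lemma branch (w : Seqs m) (N : int) : TMC A w -> exists w' : Seqs m,
  [/\ TMC A w', (forall i, i <= N -> w' i = w i) &
      exists K : nat, w' (N + K%:Z) != w (N + K%:Z)].
Proof.
move=> Hw; have [K [K0 HK]] := prim.
pose j : 'I_(m.+2) := if w (N + K%:Z) == ord0 then ord_max else ord0.
have jn : j != w (N + K%:Z).
  rewrite /j; case E: (w (N + K%:Z) == ord0).
    by move/eqP: E => ->; apply/eqP => /(congr1 val).
  by rewrite eq_sym E.
have [p [p0 pK pt]] := path_exists (HK (w N) j).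
pose v t := if (t <= K)%N then p t else iter (t - K) succ j.
exists (glue w N v); split.
- apply: glue_TMC => //.
  move=> t; rewrite /v; case: (ltngtP t K) => tK.
  + exact: pt.
  + rewrite subSn ?(ltnW tK) //=; exact: succP.
  + rewrite tK subSnn /= pK; exact: succP.
- move=> i iN; rewrite /glue; case: ltP => // Ni.
  have -> : i = N by apply/eqP; rewrite eq_le iN Ni.
  by rewrite subrr /v /= p0.
- exists K; rewrite /glue.
  have -> : (N + K%:Z < N) = false by apply/negbTE; rewrite -leNgt lerDl.
  have -> : `|(N + K%:Z - N)%R|%N = K by lia.
  by rewrite /v leqnn pK.
Qed.

End comb.


Lemma ereal_half (R : realType) (x y : \bar R) (d : R) : (0 <= x)%E -> (0 <= y)%E ->
  (x + y <= d%:E)%E -> (x <= (d / 2)%:E)%E \/ (y <= (d / 2)%:E)%E.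
Proof.
case: x => [r1| |] //; case: y => [r2| |] // h1 h2; rewrite ?lee_fin //=.
- move=> h; have [h3|h3] := leP r1 (d / 2); [by left|right].
  lra.
Qed.

Lemma cyl_sub (m : nat) (A : 'M[int]_(m.+2)) a b b' w :
  b <= b' -> cylinder A a b' w `<=` cylinder A a b w.
Proof.
move=> bb x [H1 H2]; split => // i /andP[ai ib]; apply: H2.
by rewrite ai (le_trans ib bb).
Qed.

Section halving.
Variable (R : realType) (m : nat) (A : 'M[int]_(m.+2)) (mu : probability (Seqs m) R).
Hypothesis zo : zero_one A.
Hypothesis prim : primitive_mx A.
Hypothesis muT : mu (TMC A) = 1%E.

Lemma half_cyl (z : Seqs m) (L : nat) (d : R) : TMC A z -> (0 < L)%N ->
  (mu (cylinder A 0 (L%:Z - 1) z) <= d%:E)%E ->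
  exists (z' : Seqs m) (L' : nat), [/\ TMC A z', (0 < L')%N &
    (mu (cylinder A 0 (L'%:Z - 1) z') <= (d / 2)%:E)%E].
Proof.
move=> Hz L0 Hd.
have [w' [Hw' Hagree [K HK]]] := branch zo prim (L%:Z - 1) Hz.
pose C1 := cylinder A 0 ((L + K)%N%:Z - 1) z.
pose C2 := cylinder A 0 ((L + K)%N%:Z - 1) w'.
have disj : C1 `&` C2 = set0.
  apply/seteqP; split => // x [[_ H1] [_ H2]].
  have hK : 0 <= L%:Z - 1 + K%:Z <= (L + K)%N%:Z - 1 by apply/andP; split; lia.
  by move: HK; rewrite -(H1 _ hK) -(H2 _ hK) eqxx.
have sub : C1 `|` C2 `<=` cylinder A 0 (L%:Z - 1) z.
  move=> x [Hx|[Hx1 Hx2]].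
    by move: Hx; apply: cyl_sub; lia.
  split => // i Hi; rewrite Hx2; last by lia.
  by apply: Hagree; lia.
have : (mu C1 + mu C2 <= d%:E)%E.
  rewrite -measureU ?disj //; try exact: cyl_meas.
  apply: le_trans Hd; apply: le_measure; rewrite ?inE //; try exact: cyl_meas.
  by apply: measurableU; exact: cyl_meas.
move/ereal_half => /(_ (measure_ge0 _ _) (measure_ge0 _ _)) [h|h].
  by exists z, (L + K)%N; split => //; rewrite addn_gt0 L0.
by exists w', (L + K)%N; split => //; rewrite addn_gt0 L0.
Qed.

Lemma TMC_nonempty : exists z, TMC A z.
Proof.
apply/set0P/eqP => H; move: muT; rewrite H measure0 => /eqP.
by rewrite eq_sym onee_eq0.
Qed.

Lemma small_cyl (j : nat) : exists (z : Seqs m) (L : nat), [/\ TMC A z, (0 < L)%N &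
    (mu (cylinder A 0 (L%:Z - 1) z) <= ((2 ^ j)%:R^-1)%:E)%E].
Proof.
elim: j => [|j [z [L [Hz L0 Hd]]]].
  have [z Hz] := TMC_nonempty.
  exists z, 1%N; split => //; rewrite expn0 invr1.
  by apply: probability_le1; exact: cyl_meas.
have [z' [L' [H1 H2 H3]]] := half_cyl Hz L0 Hd.
exists z', L'; split => //; move: H3.
by rewrite expnS natrM invfM mulrC.
Qed.

Lemma cyl_mono (z : Seqs m) (L L2 : nat) : (L <= L2)%N ->
  (mu (cylinder A 0 (L2%:Z - 1) z) <= mu (cylinder A 0 (L%:Z - 1) z))%E.
Proof.
move=> LL; apply: le_measure; rewrite ?inE; try exact: cyl_meas.
by apply: cyl_sub; lia.
Qed.

End halving.


Section stage.
Variable (R : realType) (m : nat) (A : 'M[int]_(m.+2)) (mu : probability (Seqs m) R).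
Variable (eps : R).
Hypothesis zo : zero_one A.
Hypothesis prim : primitive_mx A.
Hypothesis muT : mu (TMC A) = 1%E.
Hypothesis gpos : forall z (L : nat), TMC A z -> (0 < L)%N ->
  (0 < mu (cylinder A 0 (L%:Z - 1) z))%E.
Hypothesis eps0 : 0 < eps.

Lemma stage (k : nat) : exists (z : Seqs m) (L : nat) (q : R),
  [/\ TMC A z, (0 < L)%N, ~~ odd L, mu (cylinder A 0 (L%:Z - 1) z) = q%:E &
    [/\ 0 < q, q <= (2 ^ k.+2)%:R^-1 & 2 * (2 ^ k.+2)%:R <= eps * L%:R]].
Proof.
have [z [L1 [Hz L10 Hd]]] := small_cyl zo prim muT k.+2.
pose M := (Num.truncn (2 * (2 ^ k.+2)%:R / eps)).+1.
pose L := (2 * (L1 + M))%N.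
have L0 : (0 < L)%N by rewrite /L muln_gt0 /= addn_gt0 L10.
have HL1 : (L1 <= L)%N by rewrite /L; lia.
have HL := cyl_mono A mu z HL1.
have Hp := gpos Hz L0.
case E: (mu (cylinder A 0 (L%:Z - 1) z)) Hp HL => [r| |] //; last first.
  by move=> _; rewrite leNgt (le_lt_trans Hd) // ltey.
rewrite lte_fin => r0 HL.
exists z, L, r; split => //.
- by rewrite /L oddM.
split => //.
- by rewrite -lee_fin (le_trans HL Hd).
have HM : 2 * (2 ^ k.+2)%:R / eps < M%:R by apply: truncnS_gt.
have HML : (M%:R : R) <= L%:R.
  by rewrite ler_nat /L; lia.
rewrite -ler_pdivrMl // mulrC.
by apply: (le_trans (ltW HM)).
Qed.

End stage.


Section index.
Variable (len : nat -> nat).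
Hypothesis len0 : forall k, (0 < len k)%N.

Fixpoint Nst K := if K is K'.+1 then (Nst K' + len K')%N else 0%N.
Fixpoint kk n := if n is n'.+1 then
  (if n'.+1 == Nst (kk n').+1 then (kk n').+1 else kk n') else 0%N.

Lemma Nst_mono a b : (a <= b)%N -> (Nst a <= Nst b)%N.
Proof.
move=> ab; elim: b ab => [|b IH]; first by rewrite leqn0 => /eqP ->.
rewrite leq_eqVlt => /orP [/eqP -> //|]; rewrite ltnS => /IH H.
by rewrite /= (leq_trans H) // leq_addr.
Qed.

Lemma kk_inv n : (Nst (kk n) <= n < Nst (kk n).+1)%N.
Proof.
elim: n => [|n IH] /=; first by rewrite add0n len0.
move/andP: IH => [h1 h2].
case: eqP => [e|ne] /=.
  have := len0 (kk n).+1; lia.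
have : n.+1 != (Nst (kk n) + len (kk n))%N by apply/eqP.
move=> /eqP ne2; rewrite /= in h2; lia.
Qed.

Lemma kk_uniq n K : (Nst K <= n < Nst K.+1)%N -> kk n = K.
Proof.
move=> /andP[h1 h2]; have /andP[h3 h4] := kk_inv n.
have [lt|gt|//] := ltngtP (kk n) K.
  have := Nst_mono lt; lia.
have := Nst_mono gt; lia.
Qed.

End index.

Section construction.
Variable (R : realType) (m : nat) (A : 'M[int]_(m.+2)) (mu : probability (Seqs m) R).
Hypothesis inv : forall B : set (Seqs m), measurable B -> mu (@sshift m @^-1` B) = mu B.
Variable (off : nat -> nat -> int).
Variable (z : nat -> Seqs m) (L : nat -> nat) (q : nat -> R).
Hypothesis L0 : forall k, (0 < L k)%N.
Hypothesis Hq : forall k, mu (cylinder A 0 ((L k)%:Z - 1) (z k)) = (q k)%:E.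
Hypothesis q0 : forall k, 0 < q k.
Hypothesis qs : forall k, q k <= (2 ^ k.+2)%:R^-1.

Definition ss k := (2 ^ k.+2)%N.
Definition rr k := (Num.truncn (((ss k)%:R * q k)^-1)).+1.
Definition len k := (rr k * ss k)%N.

Lemma ss_gt0 k : (0 < ss k)%N. Proof. by rewrite /ss expn_gt0. Qed.
Lemma len_gt0 k : (0 < len k)%N. Proof. by rewrite /len muln_gt0 ss_gt0. Qed.

Definition N_ := Nst len.
Definition k_ := kk len.
Definition pp n := (n - N_ (k_ n))%N.
Definition bb n := (pp n %/ ss (k_ n))%N.
Definition tpos n := (pp n %% ss (k_ n))%N.
Definition an n : int := off (ss (k_ n)) (L (k_ n)) - (tpos n)%:Z.
Definition bn n : int := an n + (L (k_ n))%:Z - 1.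
Definition wn n : Seqs m := fun i => z (k_ n) (i - an n).
Definition cst k b : int := off (ss k) (L k) + (N_ k + b * ss k)%N%:Z.
Definition Ycyl k b := cylinder A (cst k b) (cst k b + (L k)%:Z - 1) (fun j => z k (j - cst k b)).
Definition Eset k := \bigcup_(b in `I_(rr k)) Ycyl k b.

Lemma pp_lt n : (pp n < len (k_ n))%N.
Proof. have := kk_inv len_gt0 n; rewrite /pp /k_ /N_ /=; lia. Qed.

Lemma bb_lt n : (bb n < rr (k_ n))%N.
Proof. by rewrite /bb ltn_divLR ?ss_gt0 //; exact: pp_lt. Qed.

Lemma n_dec n : n = (N_ (k_ n) + bb n * ss (k_ n) + tpos n)%N.
Proof.
rewrite /bb /tpos -addnA -divn_eq /pp subnKC //.
by have /andP[] := kk_inv len_gt0 n.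
Qed.

Lemma an_n n : an n + n%:Z = cst (k_ n) (bb n).
Proof.
have ez : n%:Z = (N_ (k_ n) + bb n * ss (k_ n))%N%:Z + (tpos n)%:Z.
  by rewrite -PoszD -n_dec.
rewrite /cst /an ez; lia.
Qed.

Lemma Cn_iff n x : cylinder A (an n) (bn n) (wn n) (iter n (@sshift m) x) <->
  Ycyl (k_ n) (bb n) x.
Proof.
rewrite cyl_iter /Ycyl -an_n.
have -> : bn n + n%:Z = an n + n%:Z + (L (k_ n))%:Z - 1 by rewrite /bn; lia.
have -> : (fun j => wn n (j - n%:Z)) = (fun j => z (k_ n) (j - (an n + n%:Z))).
  by apply: funext => j; rewrite /wn; f_equal; lia.
by [].
Qed.

Lemma mu_Cn n : mu (cylinder A (an n) (bn n) (wn n)) = (q (k_ n))%:E.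
Proof.
rewrite (cyl_mu0 (@cyl_meas m A) inv) -Hq; congr (mu (cylinder _ _ _ _)).
- by rewrite /bn; lia.
- by apply: funext => j; rewrite /wn addrK.
Qed.

Lemma mu_Y k b : mu (Ycyl k b) = (q k)%:E.
Proof.
rewrite /Ycyl (cyl_mu0 (@cyl_meas m A) inv) -Hq; congr (mu (cylinder _ _ _ _)).
- by lia.
- by apply: funext => j; rewrite addrK.
Qed.


Lemma E_meas k : measurable (Eset k).
Proof. by apply: bigcup_measurable => b _; exact: cyl_meas. Qed.

Lemma mu_bigsetU (F : nat -> set (Seqs m)) c (n : nat) :
  (forall b, measurable (F b)) -> (forall b, mu (F b) <= c%:E)%E ->
  (mu (\big[setU/set0]_(b < n) F b) <= (n%:R * c)%:E)%E.
Proof.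
move=> mF Fc; elim: n => [|n IH].
  by rewrite big_ord0 measure0 mul0r.
rewrite big_ord_recr /=; apply: le_trans (measureU2 _ _ _) _.
- by apply: bigsetU_measurable => b _; exact: mF.
- exact: mF.
rewrite -addn1 natrD mulrDl mul1r EFinD; apply: leeD => //.
exact: Fc.
Qed.

Lemma rr_ge k : (rr k)%:R <= ((ss k)%:R * q k)^-1 + 1.
Proof.
rewrite /rr -addn1 natrD lerD2r truncn_le invr_ge0 mulr_ge0 //.
exact: ltW.
Qed.

Lemma rr_big k : 1 <= (len k)%:R * q k.
Proof.
have h := truncnS_gt (((ss k)%:R * q k)^-1).
have sq : 0 < (ss k)%:R * q k by rewrite mulr_gt0 // ltr0n ss_gt0.
rewrite /len natrM -mulrA; rewrite -/(rr k) in h.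
by rewrite -ler_pdivrMr // ?div1r ?(ltW h) // mulrC.
Qed.

Lemma mu_E k : (mu (Eset k) <= (1 / (2 ^ k.+1)%:R)%:E)%E.
Proof.
rewrite /Eset bigcup_mkord; apply: le_trans (mu_bigsetU _ _ _) _.
- by move=> b; exact: cyl_meas.
- by move=> b; rewrite mu_Y.
rewrite lee_fin; apply: le_trans (ler_wpM2r (ltW (q0 k)) (rr_ge k)) _.
have sq : 0 < (ss k)%:R * q k by rewrite mulr_gt0 // ltr0n ss_gt0.
rewrite mulrDl mul1r invfM -mulrA mulVf ?gt_eqF // mulr1.
have := qs k; rewrite /ss !expnS !natrM -/(ss k).
set t := (2 ^ k)%:R.
have t0 : 0 < t by rewrite ltr0n expn_gt0.
rewrite !invfM => h.
move: h; rewrite /(_ / t); set u := t^-1 => h.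
lra.
Qed.


Lemma limsupE0 : mu (lim_sup_set Eset) = 0%E.
Proof.
apply: lim_sup_set_cvg0; first exact: E_meas.
apply: (le_lt_trans (y := 1%E)); last exact: ltey.
apply: le_trans (epsilon_trick0 xpredT ler01).
apply: lee_nneseries => // k _; exact: mu_E.
Qed.

Lemma ae_fin : {ae mu, forall x, finite_set
  [set n : nat | cylinder A (an n) (bn n) (wn n) (iter n (@sshift m) x)]}.
Proof.
exists (lim_sup_set Eset); split.
- apply: bigcapT_measurable => K; apply: bigcup_measurable => k _; exact: E_meas.
- exact: limsupE0.
move=> x /= Hnf K _; apply: contrapT => HK; apply: Hnf.
apply: (sub_finite_set (B := `I_(N_ K))); last exact: finite_II.
move=> n /= /Cn_iff HY.
have Ek : Eset (k_ n) x by exists (bb n) => //=; exact: bb_lt.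
have kK : (k_ n < K)%N.
  by rewrite ltnNge; apply/negP => Kk; apply: HK; exists (k_ n).
have /andP[_ h] := kk_inv len_gt0 n.
by apply: (leq_trans h); apply: Nst_mono.
Qed.


Lemma partial_ge K : ((K%:R)%:E <=
  \sum_(0 <= n < N_ K) mu (cylinder A (an n) (bn n) (wn n)))%E.
Proof.
elim: K => [|K IH]; first by rewrite big_geq.
rewrite (@big_cat_nat _ _ _ (N_ K)) //=; last by rewrite leq_addr.
rewrite -addn1 natrD EFinD; apply: leeD => //.
rewrite (@eq_big_nat _ _ _ _ _ _ (fun=> (q K)%:E)); last first.
  move=> n Hn; rewrite mu_Cn; congr (q _)%:E.
  by apply: kk_uniq => //; exact: len_gt0.
rewrite sumEFin sumr_const_nat lee_fin /= addKn.
have h := rr_big K; rewrite mulr_natl in h.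
apply: le_trans h.
by rewrite mulr1n.
Qed.

Lemma sum_infty :
  (\sum_(0 <= n <oo) mu (cylinder A (an n) (bn n) (wn n)) = +oo)%E.
Proof.
have H K : ((K%:R)%:E <= \sum_(0 <= n <oo) mu (cylinder A (an n) (bn n) (wn n)))%E.
  apply: le_trans (partial_ge K) _; apply: nneseries_lim_ge => n _ _.
  exact: measure_ge0.
move: H; case: (\sum_(0 <= n <oo) _)%E => [r| |] // H.
  have := H (Num.truncn r).+1; rewrite lee_fin => h.
  by have := @truncnS_gt R r; rewrite ltNge h.
by have := H 0%N.
Qed.


Lemma package : exists (a b : nat -> int) (w : nat -> Seqs m),
  [/\ (forall n, a n <= b n),
      (\sum_(0 <= n <oo) mu (cylinder A (a n) (b n) (w n)) = +oo)%E,
      (forall n, exists k (t : nat), [/\ (t < ss k)%N, a n = off (ss k) (L k) - t%:Z &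
              b n = a n + (L k)%:Z - 1]) &
      {ae mu, forall x, finite_set
        [set n : nat | cylinder A (a n) (b n) (w n) (iter n (@sshift m) x)]}].
Proof.
exists an, bn, wn; split.
- by move=> n; rewrite /bn; have := L0 (k_ n); lia.
- exact: sum_infty.
- move=> n; exists (k_ n), (tpos n); split => //.
  by rewrite /tpos ltn_pmod // ss_gt0.
- exact: ae_fin.
Qed.

End construction.


Unset Implicit Arguments. Set Strict Implicit.

Theorem theorem2p3 (R : realType) (m : nat) (A : 'M[int]_(m.+2))
  (phi : Seqs m -> R) (mu : probability (Seqs m) R) (eps : R) :
  zero_one A -> primitive_mx A -> holder A phi -> gibbs_measure A phi mu ->
  0 < eps ->
  (exists (a b : nat -> int) (w : nat -> Seqs m),
     (forall n, a n <= b n) /\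
     (\sum_(0 <= n <oo) mu (cylinder A (a n) (b n) (w n)) = +oo)%E /\
     (forall n, - (eps * (b n - a n + 1)%:~R / 2) <= ((a n + b n)%:~R : R) / 2
                <= eps * (b n - a n + 1)%:~R / 2) /\
     {ae mu, forall x, finite_set
        [set n : nat | cylinder A (a n) (b n) (w n) (iter n (@sshift m) x)]})
  /\
  (exists (a b : nat -> int) (w : nat -> Seqs m),
     (forall n, a n <= b n) /\
     (\sum_(0 <= n <oo) mu (cylinder A (a n) (b n) (w n)) = +oo)%E /\
     (forall n, 0 <= ((a n)%:~R : R) <= eps * (b n - a n + 1)%:~R) /\
     {ae mu, forall x, finite_set
        [set n : nat | cylinder A (a n) (b n) (w n) (iter n (@sshift m) x)]}).
Proof.
move=> zo prim _ [muT inv [c1 [c2 [P [c10 [c20 Hg]]]]]] eps0.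
have gpos : forall z (L : nat), TMC A z -> (0 < L)%N ->
    (0 < mu (cylinder A 0 (L%:Z - 1) z))%E.
  move=> z L Hz HL; have := Hg z L Hz HL; rewrite /= => /andP[h _].
  by apply: lt_le_trans h; rewrite lte_fin mulr_gt0 // expR_gt0.
have HS : forall k, exists t : Seqs m * nat * R,
  [/\ TMC A t.1.1, (0 < t.1.2)%N, ~~ odd t.1.2,
      mu (cylinder A 0 (t.1.2%:Z - 1) t.1.1) = t.2%:E &
    [/\ 0 < t.2, t.2 <= (2 ^ k.+2)%:R^-1 & 2 * (2 ^ k.+2)%:R <= eps * t.1.2%:R]].
  move=> k; have [z [L [q H]]] := stage zo prim muT gpos eps0 k.
  by exists (z, L, q).
have [F HF] := choice HS.
pose z k := (F k).1.1; pose L k := (F k).1.2; pose q k := (F k).2.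
have L0 k : (0 < L k)%N by have [] := HF k.
have Lev k : ~~ odd (L k) by have [] := HF k.
have Hq k : mu (cylinder A 0 ((L k)%:Z - 1) (z k)) = (q k)%:E by have [] := HF k.
have q0 k : 0 < q k by have [_ _ _ _ []] := HF k.
have qs k : q k <= (2 ^ k.+2)%:R^-1 by have [_ _ _ _ []] := HF k.
have sL k : 2 * (ss k)%:R <= eps * (L k)%:R by have [_ _ _ _ []] := HF k.
split.
- have [a [b [w [ab sum cen ae]]]] := package inv (fun s L => - (L./2)%:Z) L0 Hq q0 qs.
  exists a, b, w; split => //; split => //; split => // n.
  have [k [t [ts ha hb]]] := cen n.
  have hL := odd_double_half (L k); rewrite (negbTE (Lev k)) add0n -mul2n in hL.
  have h1 : b n - a n + 1 = (L k)%:Z by rewrite hb ha; lia.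
  have h2 : a n + b n = - (2 * t + 1)%N%:Z.
    rewrite hb ha; move: hL; set h := (L k)./2 => hL; lia.
  rewrite h1 h2 intrN -!pmulrn natrD natrM.
  have ht : (t.+1%:R : R) <= (ss k)%:R by rewrite ler_nat.
  have := sL k; move: ht; rewrite -addn1 natrD.
  have : (0 : R) <= t%:R by [].
  set x := eps * _; lra.
- have [a [b [w [ab sum cen ae]]]] := package inv (fun s L => s%:Z) L0 Hq q0 qs.
  exists a, b, w; split => //; split => //; split => // n.
  have [k [t [ts ha hb]]] := cen n.
  have h1 : b n - a n + 1 = (L k)%:Z by rewrite hb ha; lia.
  have h0 : a n = (ss k - t)%N%:Z by rewrite ha; lia.
  rewrite h1 h0 -!pmulrn.
  have ht : ((ss k - t)%N%:R : R) <= (ss k)%:R by rewrite ler_nat leq_subr.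
  have := sL k; move: ht; set x := eps * _; set y := (ss k)%:R.
  have : (0 : R) <= (ss k - t)%N%:R by [].
  lra.
Qed.
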